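(* Let $\mathbf{A}\in\mathbb{R}^{m\times n}$ be an $s$-regular matrix and $\mathbf{b}\in\mathbb{R}^m$, where $s$ is an integer with $0<s<n$, and let $f(\mathbf{x})=\|\mathbf{A}\mathbf{x}-\mathbf{b}\|^2$. Then the number of BF vectors of the problem (P): minimize $f(\mathbf{x})$ subject to $\|\mathbf{x}\|_0\le s$, is finite.
   Context: $\|\mathbf{x}\|_0$ denotes the number of nonzero components of $\mathbf{x}$ and $C_s=\{\mathbf{x}:\|\mathbf{x}\|_0\le s\}$; $I_1(\mathbf{x})=\{i:x_i\neq 0\}$. A matrix $\mathbf{A}$ is $s$-regular if for every index set $I\subseteq\{1,\dots,n\}$ with $|I|=s$ the columns of $\mathbf{A}$ indexed by $I$ are linearly independent. A vector $\mathbf{x}^*\in C_s$ is a basic feasible (BF) vector of (P) if: when $\|\mathbf{x}^*\|_0<s$, $\nabla f(\mathbf{x}^* )=0$; and when $\|\mathbf{x}^*\|_0=s$, $\nabla_i f(\mathbf{x}^* )=0$ for all $i\in I_1(\mathbf{x}^* )$. *)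

(* Defs.v *)
From HB Require Import structures.
From mathcomp Require Import all_boot all_order all_algebra.
From mathcomp Require Import all_classical all_reals all_analysis.
Set Implicit Arguments. Unset Strict Implicit. Unset Printing Implicit Defensive.
Import Order.TTheory GRing.Theory Num.Theory.
Local Open Scope ring_scope.

Definition l0 (R : realType) (n : nat) (x : 'cV[R]_n) : nat :=
  #|[set i : 'I_n | x i 0 != 0]|.

Definition supp (R : realType) (n : nat) (x : 'cV[R]_n) : {set 'I_n} :=
  [set i : 'I_n | x i 0 != 0].

Definition s_regular (R : realType) (m n s : nat) (A : 'M[R]_(m, n)) : Prop :=
  forall I : {set 'I_n}, #|I| = s ->
    forall c : 'cV[R]_n, (forall j, j \notin I -> c j 0 = 0) ->
      A *m c = 0 -> c = 0.

Definition lsq (R : realType) (m n : nat) (A : 'M[R]_(m, n)) (b : 'cV[R]_m)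
  (x : 'cV[R]_n) : R := \sum_(k < m) ((A *m x - b) k 0) ^+ 2.

Definition partial (R : realType) (n : nat) (f : 'cV[R]_n -> R) (i : 'I_n)
  (x : 'cV[R]_n) : R :=
  derive1 (fun t : R => f (x + t *: delta_mx i 0)) 0.

Definition grad_zero (R : realType) (n : nat) (f : 'cV[R]_n -> R) (x : 'cV[R]_n) : Prop :=
  forall i : 'I_n, partial f i x = 0.

Definition BF (R : realType) (n s : nat) (f : 'cV[R]_n -> R) (x : 'cV[R]_n) : Prop :=
  (l0 x <= s)%N /\
  ((l0 x < s)%N -> grad_zero f x) /\
  (l0 x = s -> forall i, i \in supp x -> partial f i x = 0).

(* Main.v *)
Require Import Defs.
From HB Require Import structures.
From mathcomp Require Import all_boot all_order all_algebra.
From mathcomp Require Import all_classical all_reals all_analysis.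
From mathcomp Require Import ring.
Import Order.TTheory GRing.Theory Num.Theory.
Local Open Scope ring_scope.
Local Open Scope classical_set_scope.

Lemma derive_quad (R : realType) (C B D : R) : derive1 (fun t : R => C + t * B + t ^+ 2 * D) 0 = B.
Proof.
rewrite derive1E.
pose F := (cst C + B \*: (@id R) + D \*: ((@id R) * (@id R)) : R -> R).
have H : is_derive (0:R) (1:R) F B.
  eapply is_derive_eq; first apply: is_deriveD.
  by rewrite /= !scale0r addr0 scaler0 addr0 add0r; exact: mulr1.
have -> : (fun t : R => C + t * B + t ^+ 2 * D) = F.
  by apply: funext => t; rewrite /F /= expr2 (mulrC t) (mulrC _ D).
exact: derive_val.
Qed.

Lemma partial_lsq (R : realType) (m n : nat) (A : 'M[R]_(m, n)) (b : 'cV[R]_m)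
  (i : 'I_n) (x : 'cV[R]_n) :
  partial (lsq A b) i x = (\sum_(k < m) (A *m x - b) k 0 * A k i) *+ 2.
Proof.
rewrite /partial.
have E : forall t : R, forall k : 'I_m,
   (A *m (x + t *: delta_mx i 0) - b) k 0 = (A *m x - b) k 0 + t * A k i.
  move=> t k; rewrite mulmxDr linearZ /= -colE !mxE.
  ring.
have -> : (fun t : R => lsq A b (x + t *: delta_mx i 0)) =
  (fun t : R => \sum_(k < m) ((A *m x - b) k 0) ^+ 2
      + t * ((\sum_(k < m) (A *m x - b) k 0 * A k i) *+ 2)
      + t ^+ 2 * \sum_(k < m) (A k i) ^+ 2).
  apply: funext => t; rewrite /lsq.
  under eq_bigr do rewrite E.
  rewrite -sumrMnl !mulr_sumr -!big_split /=; apply: eq_bigr => k _; ring.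
exact: derive_quad.
Qed.
Lemma extend_set (T : finType) (S : {set T}) (k : nat) :
  (#|S| <= k)%N -> (k <= #|T|)%N -> exists I : {set T}, S \subset I /\ #|I| = k.
Proof.
elim: k => [|k IH] hS hk.
  exists finset.set0; split; last by rewrite cards0.
  by move: hS; rewrite leqn0 cards_eq0 => /eqP ->.
have [eqS|ltS] := eqVneq #|S| k.+1; first by exists S.
have hS' : (#|S| <= k)%N by rewrite -ltnS ltn_neqAle ltS.
have [I [sI cI]] := IH hS' (ltnW hk).
have [t tI] : exists t, t \notin I.
  case: (pickP (fun t => t \notin I)) => [t tI|h]; first by exists t.
  have eI : I = (finset.setT : {set T}) by apply/setP => t; rewrite inE; move: (h t) => /= /negbFE.
  by move: hk; rewrite -cI eI cardsT ltnn.
exists (t |: I); split; first by apply/fintype.subsetP => u uS; rewrite in_setU1 (fintype.subsetP sI _ uS) orbT.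
by rewrite cardsU1 tI cI.
Qed.

Lemma bf_part (R : realType) (n s : nat) (f : 'cV[R]_n -> R) (x : 'cV[R]_n) :
  BF s f x -> forall i, i \in supp x -> partial f i x = 0.
Proof.
case=> hl [hlt heq] i iS.
move: hl; rewrite leq_eqVlt => /orP [/eqP e|lt]; first exact: heq.
exact: hlt.
Qed.

Arguments bf_part {R n s f x} _ {i}.
Arguments extend_set {T S k}.

Lemma bf_uniq (R : realType) (m n s : nat) (A : 'M[R]_(m, n)) (b : 'cV[R]_m)
  (x y : 'cV[R]_n) : (s <= n)%N -> s_regular s A ->
  BF s (lsq A b) x -> BF s (lsq A b) y -> supp x = supp y -> x = y.
Proof.
move=> sn hreg bx hby exy.
have gr : forall z, BF s (lsq A b) z -> forall i, i \in supp z ->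
    \sum_(k < m) (A *m z - b) k 0 * A k i = 0.
  move=> z bz i iz; have := bf_part bz iz.
  by rewrite partial_lsq => /eqP; rewrite mulrn_eq0 /= => /eqP.
set S := supp x.
set d := x - y.
have hAd : forall i, i \in S -> \sum_(k < m) (A *m d) k 0 * A k i = 0.
  move=> i iS.
  have E : forall k, (A *m d) k 0 = (A *m x - b) k 0 - (A *m y - b) k 0.
    by move=> k; rewrite /d mulmxBr !mxE; ring.
  under eq_bigr do rewrite E mulrBl.
  rewrite sumrB (gr x bx i iS) (gr y hby i); first by rewrite subr0.
  by rewrite -exy.
have hd0 : forall i, i \notin S -> d i 0 = 0.
  move=> i iS; have iS' : i \notin supp y by rewrite -exy.
  move: iS iS'; rewrite /S /supp !inE !negbK => /eqP h1 /eqP h2.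
  by rewrite /d !mxE h1 h2 subr0.
have sq0 : \sum_(k < m) ((A *m d) k 0) ^+ 2 = 0.
  transitivity (\sum_(k < m) \sum_(i < n) (A *m d) k 0 * (A k i * d i 0)).
    by apply: eq_bigr => k _; rewrite expr2 {2}mxE mulr_sumr.
  rewrite exchange_big /=; apply: big1 => i _.
  under eq_bigr do rewrite mulrA.
  rewrite -big_distrl /=.
  case iS: (i \in S); first by rewrite hAd // mul0r.
  by rewrite hd0 ?iS // mulr0.
have Ad0 : A *m d = 0.
  apply/matrixP => k j; rewrite (ord1 j) [RHS]mxE.
  have := @psumr_eq0P R 'I_m xpredT (fun k => ((A *m d) k 0) ^+ 2)
    (fun k _ => sqr_ge0 _) sq0 k isT.
  by move/eqP; rewrite sqrf_eq0 => /eqP.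
have cS : (#|S| <= s)%N by case: bx.
have [I [sI cI]] := extend_set cS (leq_trans sn (eq_leq (esym (card_ord n)))).
have d0 : d = 0.
  apply: (hreg I cI d) => // j jI; apply: hd0.
  by apply: contra jI => jS; apply: (fintype.subsetP sI).
by apply/eqP; rewrite -subr_eq0 -/d d0.
Qed.

Arguments bf_uniq {R m n s A b x y}.

Theorem lemma2p1 (R : realType) (m n s : nat) (A : 'M[R]_(m, n)) (b : 'cV[R]_m) :
  (0 < s)%N -> (s < n)%N -> @s_regular R m n s A ->
  finite_set [set x : 'cV[R]_n | @BF R n s (@lsq R m n A b) x].
Proof.
move=> s0 sn hreg.
pose g := fun S : {set 'I_n} => xget 0 [set x : 'cV[R]_n | BF s (lsq A b) x /\ supp x = S].
apply: (@sub_finite_set _ _ (g @` setT)); last exact: finite_image finite_finset.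
move=> x /= bx; exists (supp x); first by [].
have [] : [set z : 'cV[R]_n | BF s (lsq A b) z /\ supp z = supp x] (g (supp x)).
  by apply: xgetPex; exists x.
move=> bg eg; exact: (bf_uniq (ltnW sn) hreg bg bx eg).
Qed.
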